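(* Let $X$ be a topological space with $|X|\ge 2$ and $G$ an infinite Abelian group. If $X$ admits a non-constant continuous real-valued function, then every Korovin orbit $G_f$ in $X^G$ is functionally Hausdorff.
   Context: $X^G$ carries the product topology. For $f\in X^G$ and $g\in G$ let $gf\in X^G$ be given by $(gf)(x)=f(xg)$, and let $G_f=\{gf:g\in G\}\subseteq X^G$ with the subspace topology. The map $f\colon G\to X$ is a Korovin mapping if $\pi_M(G_f)=X^M$ for every countable $M\subseteq G$, where $\pi_M\colon X^G\to X^M$ is the projection; in that case $G_f$ is called a Korovin orbit. A space is functionally Hausdorff if continuous real-valued functions on it separate its points. *)

(* Defs.v *)
From HB Require Import structures.
From mathcomp Require Import all_boot all_order all_algebra.
From mathcomp Require Import all_classical all_reals topology normedtype.
Set Implicit Arguments. Unset Strict Implicit. Unset Printing Implicit Defensive.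
Import Order.TTheory GRing.Theory Num.Theory.
Import numFieldNormedType.Exports.
Local Open Scope classical_set_scope.
Local Open Scope ring_scope.

(* The group G is abelian, written additively (a zmodType). X^G with the
   product topology is [prod_topology (fun _ : G => X)]. *)
Definition power_space (G : zmodType) (X : topologicalType) : topologicalType :=
  prod_topology (fun _ : G => X).

(* (g f)(x) = f (x g), written additively: f (x + g). *)
Definition shift (G : zmodType) (X : topologicalType) (f : G -> X) (g : G)
  : power_space G X := fun x => f (x + g).

Definition shift_orbit (G : zmodType) (X : topologicalType) (f : G -> X)
  : set (power_space G X) := range (shift f).

(* Korovin mapping: pi_M(G_f) = X^M for every countable M ⊆ G, i.e.
   every map M -> X (given as the restriction to M of some p : G -> X)
   is the restriction to M of some element g f of G_f. *)
Definition korovin_mapping (G : zmodType) (X : topologicalType) (f : G -> X) :=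
  forall M : set G, countable M ->
    forall p : G -> X, exists g : G, forall m, M m -> shift f g m = p m.

Definition functionally_hausdorff (R : realType) (T : topologicalType) :=
  forall a b : T, a <> b -> exists h : T -> R, continuous h /\ h a <> h b.

(* Main.v *)
Require Import Defs.
From HB Require Import structures.
From mathcomp Require Import all_boot all_order all_algebra.
From mathcomp Require Import all_classical all_reals topology normedtype.
Import numFieldNormedType.Exports.
Import GRing.Theory.
Local Open Scope classical_set_scope.
Local Open Scope ring_scope.

Lemma out_sep (R : realType) (T : topologicalType) (A : set T) (a b : T) :
  ~ A a -> a <> b ->
  exists h : subspace A -> R, continuous h /\ h a <> h b.
Proof.
move=> Aa ab.
exists (fun z => if pselect (z = a) then 1 else 0); split.
  apply: (@subspace_eq_continuous _ _ _ (fun _ => (0:R))).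
    move=> z; rewrite inE => Az; case: pselect => // za; by subst z.
  exact: cst_continuous.
case: (pselect (a = a)) => [aa|//]; case: (pselect (b = a)) => [ba|nba].
  by case: ab.
exact/eqP/oner_neq0.
Qed.

Lemma out_sep2 (R : realType) (T : topologicalType) (A : set T) (a b : T) :
  ~ A b -> a <> b ->
  exists h : subspace A -> R, continuous h /\ h a <> h b.
Proof.
move=> Ab ab.
exists (fun z => if pselect (z = b) then 1 else 0); split.
  apply: (@subspace_eq_continuous _ _ _ (fun _ => (0:R))).
    move=> z; rewrite inE => Az; case: pselect => // zb; by subst z.
  exact: cst_continuous.
case: (pselect (b = b)) => [bb|//]; case: (pselect (a = b)) => [ab'|nab].
  by case: ab.
by move=> /esym/eqP; rewrite oner_eq0.
Qed.

Theorem proposition4p3 (R : realType) (X : topologicalType) (G : zmodType)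
  (hX2 : exists x y : X, x <> y)
  (hGinf : infinite_set [set: G])
  (hnc : exists h : X -> R, continuous h /\ exists x y : X, h x <> h y)
  (f : G -> X) (hf : korovin_mapping f) :
  functionally_hausdorff R (subspace (shift_orbit f)).
Proof.
move=> a b ab.
have [Aa|Aa] := pselect (shift_orbit f a); last exact: out_sep.
have [Ab|Ab] := pselect (shift_orbit f b); last exact: out_sep2.
case: Aa => g1 _ ea; case: Ab => g2 _ eb.
have [h [hc [x0 [y0 hxy]]]] := hnc.
set d := g2 - g1.
have d0 : d != 0.
  apply/eqP => /eqP; rewrite subr_eq0 => /eqP e; apply: ab.
  by rewrite -ea -eb e.
pose M : set G := [set 0; d].
have cM : countable M by exact/finite_set_countable/finite_set2.
pose p : G -> X := fun m => if m == 0 then x0 else y0.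
have [g Hg] := hf M cM p.
have e0 : f (0 + g) = x0.
  by have := Hg 0 (or_introl erefl); rewrite /p eqxx.
have ed : f (d + g) = y0.
  by have := Hg d (or_intror erefl); rewrite /p (negbTE d0).
exists (fun z : power_space G X => h (z (g - g1))); split.
  apply: continuous_subspaceT => z.
  apply: continuous_comp; last exact: hc.
  exact: proj_continuous.
rewrite -ea -eb /Defs.shift /=.
have -> : g - g1 + g1 = 0 + g by rewrite subrK add0r.
have -> : g - g1 + g2 = d + g by rewrite /d addrAC [in RHS]addrAC [g + g2]addrC.
by rewrite e0 ed.
Qed.
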